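(* Let $0<\varepsilon_0\le1$, $N\ge1$, and for $m=1,\dots,N$ let $A_m$ be an $(h_{A_m},k_{A_m},\delta_{A_m},G_{A_m},\varepsilon_{A_m})$-expansion with coefficients $a_{A_m,l}$, $h_{A_m}\le l\le k_{A_m}$ (set $a_{A_m,l}=0$ outside this range). Then for every $n=1,\dots,N$: (i) $B_n=A_1+\cdots+A_n$ is an $(h_{B_n},k_{B_n},\delta_{B_n},G_{B_n},\varepsilon_{B_n})$-expansion with $h_{B_n}=\min_{m\le n}h_{A_m}$, $k_{B_n}=\min_{m\le n}k_{A_m}$, coefficients $b_{l,n}=\sum_{m=1}^n a_{A_m,l}$, $\delta_{B_n}=\min_{m\in\mathbb{K}_n}\delta_{A_m}\ \ (\ge\min_{1\le m\le n}\delta_{A_m})$ where $\mathbb{K}_n=\{m\le n: k_{A_m}=\min(k_{A_1},\dots,k_{A_n})\}$, $\varepsilon_{B_n}=\min(\varepsilon_{A_1},\dots,\varepsilon_{A_n})$, and $G_{B_n}=\sum_{1\le i\le n}\Big(G_{A_i}\varepsilon_{B_n}^{k_{A_i}+\delta_{A_i}-k_{B_n}-\delta_{B_n}}+\sum_{k_{B_n}<j\le k_{A_i}}|a_{A_i,j}|\varepsilon_{B_n}^{j-k_{B_n}-\delta_{B_n}}\Big)$. (ii) $C_n=A_1\times\cdots\times A_n$ is an $(h_{C_n},k_{C_n},\delta_{C_n},G_{C_n},\varepsilon_{C_n})$-expansion with $h_{C_n}=\sum_{m\le n}h_{A_m}$, $k_{C_n}=\min_{1\le l\le n}\big(k_{A_l}+\sum_{r\le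 n,r\ne l}h_{A_r}\big)$, coefficients $c_{r,n}=\sum_{l_1+\cdots+l_n=r,\ h_{A_i}\le l_i\le k_{A_i}}\prod_{i=1}^n a_{A_i,l_i}$, $\delta_{C_n}=\min_{m\in\mathbb{L}_n}\delta_{A_m}\ (\ge\min_{1\le m\le n}\delta_{A_m})$ where $\mathbb{L}_n=\{m\le n: k_{A_m}+\sum_{r\le n,r\ne m}h_{A_r}=k_{C_n}\}$, $\varepsilon_{C_n}=\min_{i\le n}\varepsilon_{A_i}$, and $G_{C_n}=\sum_{k_{C_n}<l_1+\cdots+l_n,\ h_{A_i}\le l_i\le k_{A_i}}\prod_{i=1}^n|a_{A_i,l_i}|\,\varepsilon_{C_n}^{l_1+\cdots+l_n-k_{C_n}-\delta_{C_n}}+\sum_{1\le j\le n}\prod_{1\le i\le n,i\ne j}\Big(\sum_{h_{A_i}\le l\le k_{A_i}}|a_{A_i,l}|\varepsilon_{C_n}^{l}+G_{A_i}\varepsilon_{C_n}^{k_{A_i}+\delta_{A_i}}\Big)G_{A_j}\varepsilon_{C_n}^{k_{A_j}+\delta_{A_j}-k_{C_n}-\delta_{C_n}}$. (iii) The parameters $\delta_{B_n},G_{B_n},\varepsilon_{B_n}$ and $\delta_{C_n},G_{C_n},\varepsilon_{C_n}$ are invariant under any permutation of the summands, respectively factors.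
   Context: Let $0<\varepsilon_0\le1$. A function $A:(0,\varepsilon_0]\to\mathbb{R}$ is an $(h,k,\delta,G,\varepsilon_A)$-expansion with coefficients $a_h,\dots,a_k$ (integers $h\le k$, reals $a_l$, $\delta\in(0,1]$, $G\in(0,\infty)$, $\varepsilon_A\in(0,\varepsilon_0]$) if the remainder $o_A(\varepsilon):=A(\varepsilon)-\sum_{l=h}^k a_l\varepsilon^l$ satisfies $|o_A(\varepsilon)|\le G\varepsilon^{k+\delta}$ for $0<\varepsilon\le\varepsilon_A$. *)

(* Defs.v *)
From HB Require Import structures.
From mathcomp Require Import all_boot all_order all_algebra.
From mathcomp Require Import reals exp.
Set Implicit Arguments. Unset Strict Implicit. Unset Printing Implicit Defensive.
Import Order.TTheory GRing.Theory Num.Theory.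
Local Open Scope ring_scope.

Definition idx (n : nat) : seq nat := iota 1 n.

Definition zrange (lo hi : int) : seq int :=
  if lo <= hi then [seq lo + (i%:Z) | i <- iota 0 `|hi - lo|.+1] else [::].

Section Params.
Context {R : realType}.

Definition zminl (f : nat -> int) (s : seq nat) : int :=
  \big[Num.min/f (head 0%N s)]_(m <- s) f m.
Definition rminl (f : nat -> R) (s : seq nat) : R :=
  \big[Num.min/f (head 0%N s)]_(m <- s) f m.

Definition pwz (x : R) (l : int) : R := powR x (l%:~R).

Definition is_expansion (eps0 : R) (A : R -> R) (h k : int) (c : int -> R)
    (delta G epsA : R) : Prop :=
  [/\ h <= k, 0 < delta <= 1, 0 < G, 0 < epsA <= eps0 &
      forall x : R, 0 < x <= epsA ->
        `|A x - \sum_(l <- zrange h k) c l * pwz x l| <= G * powR x (k%:~R + delta)].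

Variables (h k : nat -> int) (a : nat -> int -> R) (d G ep : nat -> R).

Definition ext (m : nat) (l : int) : R :=
  if (h m <= l) && (l <= k m) then a m l else 0.

Definition hB (n : nat) : int := zminl h (idx n).
Definition kB (n : nat) : int := zminl k (idx n).
Definition bcoef (n : nat) (l : int) : R := \sum_(m <- idx n) ext m l.
Definition KB (n : nat) : seq nat := [seq m <- idx n | k m == kB n].
Definition dB (n : nat) : R := rminl d (KB n).
Definition eB (n : nat) : R := rminl ep (idx n).
Definition GB (n : nat) : R :=
  \sum_(i <- idx n)
    (G i * powR (eB n) ((k i)%:~R + d i - (kB n)%:~R - dB n)
     + \sum_(j <- zrange (kB n + 1) (k i))
         `|ext i j| * powR (eB n) (j%:~R - (kB n)%:~R - dB n)).

(* all multi-indices (l_1,...,l_n) with h i <= l_i <= k i, as functions on 1..n *)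
Fixpoint box (n : nat) : seq (nat -> int) :=
  match n with
  | 0 => [:: fun _ => 0]
  | n'.+1 => [seq (fun i => if i == n'.+1 then j else l i)
               | l <- box n', j <- zrange (h n'.+1) (k n'.+1)]
  end.
Definition lsum (n : nat) (l : nat -> int) : int := \sum_(i <- idx n) l i.

Definition hC (n : nat) : int := \sum_(m <- idx n) h m.
Definition kC (n : nat) : int :=
  zminl (fun m => k m + \sum_(r <- idx n | r != m) h r) (idx n).
Definition ccoef (n : nat) (r : int) : R :=
  \sum_(l <- box n | lsum n l == r) \prod_(i <- idx n) a i (l i).
Definition LC (n : nat) : seq nat :=
  [seq m <- idx n | k m + \sum_(r <- idx n | r != m) h r == kC n].
Definition dC (n : nat) : R := rminl d (LC n).
Definition eC (n : nat) : R := rminl ep (idx n).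
Definition GC (n : nat) : R :=
  \sum_(l <- box n | kC n < lsum n l)
      (\prod_(i <- idx n) `|a i (l i)|)
        * powR (eC n) ((lsum n l)%:~R - (kC n)%:~R - dC n)
  + \sum_(j <- idx n)
      (\prod_(i <- idx n | i != j)
          (\sum_(l <- zrange (h i) (k i)) `|a i l| * pwz (eC n) l
           + G i * powR (eC n) ((k i)%:~R + d i)))
      * G j * powR (eC n) ((k j)%:~R + d j - (kC n)%:~R - dC n).

End Params.

Definition perm_range (n : nat) (s : nat -> nat) : Prop :=
  (forall m, (1 <= m <= n)%N -> (1 <= s m <= n)%N) /\
  (forall m1 m2, (1 <= m1 <= n)%N -> (1 <= m2 <= n)%N -> s m1 = s m2 -> m1 = m2).

(* Main.v *)
Set Warnings "-notation-overridden,-ambiguous-paths,-deprecated".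
Require Import Defs.
From HB Require Import structures.
From mathcomp Require Import all_boot all_order all_algebra.
From mathcomp Require Import reals exp.
From mathcomp Require Import zify ring lra.
Import Order.TTheory GRing.Theory Num.Theory.
Local Open Scope ring_scope.
Lemma mem_zrange (lo hi x : int) : (x \in zrange lo hi) = (lo <= x <= hi).
Proof.
rewrite /zrange; case: ifP => Hlh.
  apply/mapP/idP.
    move=> [i]; rewrite mem_iota => /andP[_ Hi] ->; lia.
  move=> Hx; exists `|x - lo|%N; last by lia.
  rewrite mem_iota; lia.
by rewrite in_nil; lia.
Qed.

Lemma uniq_zrange (lo hi : int) : uniq (zrange lo hi).
Proof.
rewrite /zrange; case: ifP => // _.
rewrite map_inj_uniq ?iota_uniq // => i j /addrI; by case.
Qed.

Lemma size_zrange_perm (lo hi : int) (s : seq int) :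
  uniq s -> (forall x, (x \in s) = (lo <= x <= hi)) -> perm_eq (zrange lo hi) s.
Proof.
move=> us Hs; apply: uniq_perm => //; first exact: uniq_zrange.
by move=> x; rewrite mem_zrange Hs.
Qed.

Lemma big_zrange_perm (R : Type) (idx : R) (op : Monoid.com_law idx)
   (lo hi : int) (s : seq int) (P : pred int) (F : int -> R) :
  uniq s -> (forall x, (x \in s) = (lo <= x <= hi)) ->
  \big[op/idx]_(l <- zrange lo hi | P l) F l = \big[op/idx]_(l <- s | P l) F l.
Proof. by move=> us Hs; apply: perm_big; apply: size_zrange_perm. Qed.

Lemma big_zrange_sub (R : Type) (idx : R) (op : Monoid.com_law idx)
   (lo hi lo' hi' : int) (F : int -> R) :
  lo' <= lo -> hi <= hi' ->
  \big[op/idx]_(l <- zrange lo' hi' | (lo <= l) && (l <= hi)) F l =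
  \big[op/idx]_(l <- zrange lo hi) F l.
Proof.
move=> H1 H2; rewrite -big_filter; symmetry; apply: big_zrange_perm.
  by rewrite filter_uniq // uniq_zrange.
by move=> x; rewrite mem_filter mem_zrange; lia.
Qed.

Lemma big_zrange_cat (R : Type) (idx : R) (op : Monoid.com_law idx)
   (lo mid hi : int) (P : pred int) (F : int -> R) :
  lo <= mid + 1 -> mid <= hi ->
  \big[op/idx]_(l <- zrange lo hi | P l) F l =
  op (\big[op/idx]_(l <- zrange lo mid | P l) F l)
     (\big[op/idx]_(l <- zrange (mid + 1) hi | P l) F l).
Proof.
move=> H1 H2; rewrite -big_cat; apply: big_zrange_perm.
  rewrite cat_uniq !uniq_zrange /= andbT; apply/hasPn => x.
  rewrite !mem_zrange; lia.
by move=> x; rewrite mem_cat !mem_zrange; lia.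
Qed.

Lemma eq_big_all (R : Type) (idx : R) (op : R -> R -> R) (T : Type)
   (s : seq T) (Q : pred T) (P : pred T) (F G : T -> R) :
  all Q s -> (forall x, Q x -> F x = G x) ->
  \big[op/idx]_(x <- s | P x) F x = \big[op/idx]_(x <- s | P x) G x.
Proof.
elim: s => [|y s IH] /=; first by rewrite !big_nil.
move=> /andP[Qy Qs] H; rewrite !big_cons IH //; by rewrite H.
Qed.

Lemma ler_sum_all (R : numDomainType) (T : Type)
   (s : seq T) (Q : pred T) (P : pred T) (F G : T -> R) :
  all Q s -> (forall x, Q x -> P x -> F x <= G x) ->
  \sum_(x <- s | P x) F x <= \sum_(x <- s | P x) G x.
Proof.
elim: s => [|y s IH] /=; first by rewrite !big_nil.
move=> /andP[Qy Qs] H; rewrite !big_cons; case: ifP => Py.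
  by apply: lerD; [exact: H|exact: IH].
exact: IH.
Qed.

Lemma bigmin_le (T : realDomainType) (f : nat -> T) (s : seq nat) x0 :
  \big[Num.min/x0]_(m <- s) f m <= x0 /\
  (forall m, m \in s -> \big[Num.min/x0]_(m <- s) f m <= f m) /\
  (\big[Num.min/x0]_(m <- s) f m = x0 \/
   exists2 m, m \in s & \big[Num.min/x0]_(m <- s) f m = f m).
Proof.
elim: s => [|y s [IH1 [IH2 IH3]]]; first by rewrite big_nil; split; [|split; [|left]].
rewrite big_cons; split; first by rewrite ge_min IH1 orbT.
split.
  move=> m; rewrite inE => /orP[/eqP->|ms]; first by rewrite ge_min lexx.
  by rewrite ge_min IH2 ?orbT.
case: (leP (f y) (\big[Num.min/x0]_(j <- s) f j)) => H.
  right; exists y; first by rewrite inE eqxx.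
  by [].
case: IH3 => [->|[m ms ->]]; [by left|right; exists m => //].
by rewrite inE ms orbT.
Qed.

Lemma minl_spec (T : realDomainType) (f : nat -> T) (s : seq nat) :
  s != [::] ->
  (forall m, m \in s -> \big[Num.min/f (head 0%N s)]_(m <- s) f m <= f m) /\
  exists2 m, m \in s & \big[Num.min/f (head 0%N s)]_(m <- s) f m = f m.
Proof.
move=> sn; have [_ [H2 H3]] := bigmin_le T f s (f (head 0%N s)).
split => //; case: H3 => [->|//]; exists (head 0%N s) => //.
by case: {H2} s sn => //= y s _; rewrite inE eqxx.
Qed.

Lemma minl_unique (T : realDomainType) (f : nat -> T) (s : seq nat) (v : T) :
  s != [::] -> (forall m, m \in s -> v <= f m) -> (exists2 m, m \in s & v = f m) ->
  \big[Num.min/f (head 0%N s)]_(m <- s) f m = v.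
Proof.
move=> sn H1 [m ms Ev]; have [H3 [m' m's E]] := minl_spec T f s sn.
apply/eqP; rewrite eq_le {1}Ev H3 //=; by rewrite E H1.
Qed.

Lemma zminl_spec f s : s != [::] ->
  (forall m, m \in s -> zminl f s <= f m) /\ exists2 m, m \in s & zminl f s = f m.
Proof. exact: minl_spec. Qed.

Lemma rminl_spec (R : realType) (f : nat -> R) s : s != [::] ->
  (forall m, m \in s -> rminl f s <= f m) /\ exists2 m, m \in s & rminl f s = f m.
Proof. exact: minl_spec. Qed.

Lemma mem_idx n m : (m \in idx n) = (1 <= m <= n)%N.
Proof. rewrite /idx mem_iota; lia. Qed.

Lemma idx_uniq n : uniq (idx n).
Proof. exact: iota_uniq. Qed.

Lemma idxS n : idx n.+1 = rcons (idx n) n.+1.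
Proof. by rewrite /idx -cats1 -{1}[n.+1]addn1 iotaD add1n. Qed.

Lemma idx_nil n : (idx n != [::]) = (0 < n)%N.
Proof. by case: n. Qed.

Lemma perm_idx n s : perm_range n s -> perm_eq (map s (idx n)) (idx n).
Proof.
move=> [H1 H2]; have us : uniq (map s (idx n)).
  rewrite map_inj_in_uniq ?idx_uniq // => x y; rewrite !mem_idx; exact: H2.
have sub : {subset map s (idx n) <= idx n}.
  move=> y /mapP[x]; rewrite !mem_idx => Hx ->; exact: H1.
have sz : (size (idx n) <= size (map s (idx n)))%N by rewrite size_map.
have [_ E] := uniq_min_size us sub sz.
by apply: uniq_perm => //; exact: idx_uniq.
Qed.

Lemma big_idx_perm (R : Type) (idx0 : R) (op : Monoid.com_law idx0) n s (F : nat -> R) :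
  perm_range n s ->
  \big[op/idx0]_(i <- idx n) F (s i) = \big[op/idx0]_(i <- idx n) F i.
Proof.
move=> Hs; transitivity (\big[op/idx0]_(i <- map s (idx n)) F i); first by rewrite big_map.
by apply: perm_big; exact: perm_idx.
Qed.

Lemma perm_surj n s j : perm_range n s -> (1 <= j <= n)%N ->
  exists2 i, (1 <= i <= n)%N & s i = j.
Proof.
move=> Hs; rewrite -mem_idx -(perm_mem (perm_idx n s Hs)) => /mapP[i].
by rewrite mem_idx => Hi ->; exists i.
Qed.

Section Pow.
Variable R : realType.
Implicit Types x y : R.

Lemma powRD' x (p q : R) : 0 < x -> powR x (p + q) = powR x p * powR x q.
Proof. by move=> x0; rewrite powRD // (gt_eqF x0) implybT. Qed.

Lemma powR_sum x (I : Type) (s : seq I) (P : pred I) (f : I -> R) : 0 < x ->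
  powR x (\sum_(i <- s | P i) f i) = \prod_(i <- s | P i) powR x (f i).
Proof.
move=> x0; elim: s => [|y s IH]; first by rewrite !big_nil powRr0.
rewrite !big_cons; case: ifP => // _; by rewrite powRD' // IH.
Qed.

Lemma intr_sum (I : Type) (s : seq I) (P : pred I) (f : I -> int) :
  ((\sum_(i <- s | P i) f i)%:~R : R) = \sum_(i <- s | P i) (f i)%:~R.
Proof.
elim: s => [|y s IH]; first by rewrite !big_nil.
rewrite !big_cons; case: ifP => // _; by rewrite intrD IH.
Qed.

Lemma powR_mono x y (e : R) : 0 < x -> x <= y -> 0 <= e -> powR x e <= powR y e.
Proof.
move=> x0 xy e0; apply: (ge0_ler_powR e0) => //; rewrite nnegrE ?(ltW x0) //.
exact: (le_trans (ltW x0)).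
Qed.

Lemma powR_mono2 x y (p q : R) : 0 < x -> x <= y -> 0 <= p + q ->
  powR x p * powR x q <= powR y p * powR y q.
Proof.
move=> x0 xy e0; have y0 : 0 < y by exact: (lt_le_trans x0).
by rewrite -!powRD' //; apply: powR_mono.
Qed.

Lemma pwz_gt0 x l : 0 < x -> 0 < pwz x l.
Proof. by move=> x0; rewrite /pwz powR_gt0. Qed.

Lemma pwzD x (a b : int) : 0 < x -> pwz x (a + b) = pwz x a * pwz x b.
Proof. by move=> x0; rewrite /pwz intrD powRD'. Qed.

Lemma pwz_sum x (I : Type) (s : seq I) (P : pred I) (f : I -> int) : 0 < x ->
  pwz x (\sum_(i <- s | P i) f i) = \prod_(i <- s | P i) pwz x (f i).
Proof. by move=> x0; rewrite /pwz intr_sum powR_sum. Qed.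

Lemma int_gap (a b : int) (da db : R) : a <= b -> 0 < da -> db <= 1 ->
  (a == b -> db <= da) -> 0 <= b%:~R + da - a%:~R - db.
Proof.
move=> ab da0 db1 H; case: (boolP (a == b)) => [/eqP E|nE].
  by move: (H (introT eqP E)); rewrite E; lra.
have : a + 1 <= b by lia.
rewrite -(ler_int R) intrD => H2; lra.
Qed.

End Pow.

Lemma all_allpairs (S T U : Type) (p : pred U) (f : S -> T -> U) (s : seq S) (t : S -> seq T) :
  all p [seq f x y | x <- s, y <- t x] = all (fun x => all (fun y => p (f x y)) (t x)) s.
Proof.
elim: s => [|x s IH] //=; rewrite all_cat IH; congr (_ && _).
by rewrite all_map.
Qed.

Definition upd (l : nat -> int) (n : nat) (j : int) : nat -> int :=
  fun i => if i == n then j else l i.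

Lemma boxS h k n : box h k n.+1 =
  [seq upd l n.+1 j | l <- box h k n, j <- zrange (h n.+1) (k n.+1)].
Proof. by []. Qed.

Definition inbox (h k : nat -> int) n (l : nat -> int) : bool :=
  all (fun i => (h i <= l i <= k i)) (idx n).

Lemma box_all h k n : all (inbox h k n) (box h k n).
Proof.
elim: n => [|n IH]; first by [].
rewrite boxS all_allpairs; apply: (sub_all _ IH) => l Hl0; apply/allP => j.
rewrite mem_zrange => Hj; rewrite /inbox idxS all_rcons /upd eqxx Hj /=.
move: Hl0; rewrite /inbox => /allP Hl; apply/allP => i ii.
have : i != n.+1 by move: ii; rewrite mem_idx; lia.
by move/negbTE => ->; apply: Hl.
Qed.

Lemma big_prod_upd (R : comRingType) (F : nat -> int -> R) n l j :
  \prod_(i <- idx n.+1) F i (upd l n.+1 j i) = (\prod_(i <- idx n) F i (l i)) * F n.+1 j.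
Proof.
rewrite idxS big_rcons /= /upd eqxx; congr (_ * _).
apply: eq_big_seq => i; rewrite mem_idx => Hi.
by have -> : (i == n.+1) = false by lia.
Qed.

Lemma box_prod (R : comRingType) h k (F : nat -> int -> R) n :
  \sum_(l <- box h k n) \prod_(i <- idx n) F i (l i) =
  \prod_(i <- idx n) \sum_(j <- zrange (h i) (k i)) F i j.
Proof.
elim: n => [|n IH]; first by rewrite /= big_cons big_nil /idx /= !big_nil addr0.
rewrite boxS big_allpairs_dep idxS big_rcons /= -idxS -IH mulr_suml.
apply: eq_bigr => l _; rewrite mulr_sumr; apply: eq_bigr => j _.
exact: big_prod_upd.
Qed.

Lemma lsum_upd n l j : lsum n.+1 (upd l n.+1 j) = lsum n l + j.
Proof.
rewrite /lsum idxS big_rcons /= /upd eqxx; congr (_ + _).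
apply: eq_big_seq => i; rewrite mem_idx => Hi.
by have -> : (i == n.+1) = false by lia.
Qed.

Lemma inbox_lsum h k n l : inbox h k n l -> hC h n <= lsum n l.
Proof.
move=> /allP H; rewrite /hC /lsum [X in X <= _]big_seq [X in _ <= X]big_seq.
by apply: ler_sum => i ii; case/andP: (H i ii).
Qed.

Section PartB.
Variable R : realType.

Lemma psum_gt0 (s : seq nat) (F : nat -> R) :
  s != [::] -> (forall i, i \in s -> 0 < F i) -> 0 < \sum_(i <- s) F i.
Proof.
case: s => [//|y s] _ H; rewrite big_cons.
apply: ltr_wpDr; last by apply: H; rewrite inE eqxx.
rewrite big_seq; apply: sumr_ge0 => i iin; apply: ltW; apply: H.
by rewrite inE iin orbT.
Qed.

Lemma big_zrange_ext (lo hi lo' hi' : int) (g : int -> R) :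
  lo' <= lo -> hi <= hi' -> (forall l, ~~ ((lo <= l) && (l <= hi)) -> g l = 0) ->
  \sum_(l <- zrange lo' hi') g l = \sum_(l <- zrange lo hi) g l.
Proof.
move=> H1 H2 H; rewrite (bigID (fun l => (lo <= l) && (l <= hi))) /=.
rewrite big_zrange_sub // [X in _ + X]big1 ?addr0 // => l; exact: H.
Qed.

Lemma mono_split (x y e e' c : R) : 0 < x -> x <= y -> e' = e - c -> 0 <= e' ->
  powR x e <= powR y e' * powR x c.
Proof.
move=> x0 xy E e0; have -> : e = e' + c by rewrite E; ring.
by rewrite powRD' //; apply: ler_wpM2r; [exact: powR_ge0|exact: powR_mono].
Qed.

Lemma partB (eps0 : R) (N : nat) (A : nat -> R -> R)
    (h k : nat -> int) (a : nat -> int -> R) (d G ep : nat -> R) :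
  (forall m, (1 <= m <= N)%N ->
     is_expansion eps0 (A m) (h m) (k m) (a m) (d m) (G m) (ep m)) ->
  forall n, (1 <= n <= N)%N ->
  is_expansion eps0 (fun x => \sum_(m <- idx n) A m x)
        (hB h n) (kB k n) (bcoef h k a n) (dB k d n) (GB h k a d G ep n) (eB ep n)
  /\ rminl d (idx n) <= dB k d n.
Proof.
move=> Hexp n Hn.
have nn : idx n != [::] by rewrite idx_nil; lia.
have Hm : forall m, m \in idx n ->
    is_expansion eps0 (A m) (h m) (k m) (a m) (d m) (G m) (ep m).
  by move=> m; rewrite mem_idx => Hm; apply: Hexp; lia.
have [kB1 [m0 m0i kBE]] := zminl_spec k (idx n) nn.
have [hB1 [m3 m3i hBE]] := zminl_spec h (idx n) nn.
have [eB1 [m2 m2i eBE]] := rminl_spec R ep (idx n) nn.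
have m0K : m0 \in KB k n by rewrite mem_filter m0i andbT -kBE /kB eqxx.
have KBn : KB k n != [::] by apply/eqP => E; rewrite E in m0K.
have [dB1 [m1 m1K dBE]] := rminl_spec R d (KB k n) KBn.
have m1i : m1 \in idx n by move: m1K; rewrite mem_filter => /andP[].
have KBk : forall m, m \in KB k n -> k m = kB k n.
  by move=> m; rewrite mem_filter => /andP[/eqP ->].
have /andP[d0 d1] : 0 < dB k d n <= 1.
  by rewrite /dB dBE; have [_ /andP[-> ->] _ _ _] := Hm m1 m1i.
have /andP[e0 e1] : 0 < eB ep n <= eps0.
  by rewrite /eB eBE; have [_ _ _ /andP[-> ->] _] := Hm m2 m2i.
have hk : hB h n <= kB k n.
  have [Hhk _ _ _ _] := Hm m0 m0i.
  by rewrite /kB kBE (le_trans (hB1 m0 m0i)).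
split; last first.
  have [H1 _] := rminl_spec R d (idx n) nn; rewrite /dB dBE; exact: H1.
split => //; first by rewrite d0 d1.
-
  apply: psum_gt0 => // i ii; have [_ _ Gi _ _] := Hm i ii.
  apply: ltr_wpDr; last by rewrite mulr_gt0 // powR_gt0.
  by rewrite big_seq; apply: sumr_ge0 => j _; rewrite mulr_ge0 // powR_ge0.
- by rewrite e0 e1.
move=> x /andP[x0 xe].
set X := powR x ((kB k n)%:~R + (dB k d n)).
have xm : forall m, m \in idx n -> x <= ep m.
  by move=> m mi; apply: (le_trans xe); rewrite /eB; apply: eB1.
have dec : forall m, m \in idx n ->
  \sum_(l <- zrange (h m) (k m)) a m l * pwz x l =
  \sum_(l <- zrange (hB h n) (kB k n)) ext h k a m l * pwz x l +
  \sum_(j <- zrange ((kB k n) + 1) (k m)) ext h k a m j * pwz x j.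
  move=> m mi; have [Hhk _ _ _ _] := Hm m mi.
  have kbm : (kB k n) <= k m by apply: kB1.
  have hbm : (hB h n) <= h m by apply: hB1.
  rewrite -big_zrange_cat; [|by apply: (le_trans hk); rewrite lerDl|exact: kbm].
  rewrite (big_zrange_ext (h m) (k m) (hB h n) (k m)) //.
    apply: eq_big_seq => l; rewrite mem_zrange => Hl.
    by rewrite /ext Hl.
  by move=> l Hl; rewrite /ext (negbTE Hl) mul0r.
have E : \sum_(m <- idx n) A m x - \sum_(l <- zrange (hB h n) (kB k n)) bcoef h k a n l * pwz x l =
  \sum_(m <- idx n) ((A m x - \sum_(l <- zrange (h m) (k m)) a m l * pwz x l) +
      \sum_(j <- zrange ((kB k n) + 1) (k m)) ext h k a m j * pwz x j).
  rewrite /bcoef; under [X in _ - X]eq_bigr do rewrite mulr_suml.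
  rewrite exchange_big /= -sumrB big_seq [RHS]big_seq.
  apply: eq_bigr => m mi; rewrite dec //; ring.
rewrite E; apply: (le_trans (ler_norm_sum _ _ _)).
rewrite /GB mulr_suml big_seq [X in _ <= X]big_seq; apply: ler_sum => m mi.
have [Hhk /andP[dm0 dm1] Gm0 /andP[epm0 epm1] Hb] := Hm m mi.
rewrite mulrDl; apply: (le_trans (ler_normD _ _)); apply: lerD.
  apply: (le_trans (Hb x _)); first by rewrite x0 xm.
  rewrite -mulrA; apply: ler_wpM2l; first exact: ltW.
  rewrite /X; apply: (mono_split _ _ _ _ _ x0 xe); first by ring.
  apply: int_gap => //; first by apply: kB1.
  move=> /eqP Ek; apply: dB1; rewrite mem_filter mi andbT -Ek /(kB k n) eqxx //.
rewrite mulr_suml; apply: (le_trans (ler_norm_sum _ _ _)).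
rewrite big_seq [X in _ <= X]big_seq; apply: ler_sum => j ji.
rewrite normrM (ger0_norm (ltW (pwz_gt0 _ _ j x0))) -mulrA.
apply: ler_wpM2l => //; rewrite /X; apply: (mono_split _ _ _ _ _ x0 xe); first by ring.
move: ji; rewrite mem_zrange => /andP[Hj _].
have : ((kB k n) + 1)%:~R <= (j%:~R : R) by rewrite ler_int.
rewrite intrD; lra.
Qed.

End PartB.

Section PartC.
Variable R : realType.

Lemma sum_eq_zr (F : int -> R) lo hi v :
  \sum_(r <- zrange lo hi | v == r) F r = if (lo <= v) && (v <= hi) then F v else 0.
Proof.
case: ifP => H.
  rewrite -big_filter.
  have -> : [seq r <- zrange lo hi | v == r] = [:: v].
    rewrite (@eq_filter _ _ (pred1 v)); last by move=> r /=; rewrite eq_sym.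
    by rewrite filter_pred1_uniq ?uniq_zrange // mem_zrange.
  by rewrite big_seq1.
rewrite big1_seq // => r /andP[/eqP <-]; by rewrite mem_zrange H.
Qed.

Lemma tele (n : nat) (Af Pf Sf : nat -> R) :
  (forall i, i \in idx n -> `|Af i| <= Sf i /\ `|Pf i| <= Sf i) ->
  `|\prod_(i <- idx n) Af i - \prod_(i <- idx n) Pf i| <=
  \sum_(j <- idx n) (\prod_(i <- idx n | i != j) Sf i) * `|Af j - Pf j|.
Proof.
elim: n => [|n IH] H; first by rewrite /idx /= !big_nil subrr normr0.
have H' : forall i, i \in idx n -> `|Af i| <= Sf i /\ `|Pf i| <= Sf i.
  by move=> i; rewrite mem_idx => Hi; apply: H; rewrite mem_idx; lia.
have [HA HP] : `|Af n.+1| <= Sf n.+1 /\ `|Pf n.+1| <= Sf n.+1.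
  by apply: H; rewrite mem_idx; lia.
have S0 : 0 <= Sf n.+1 by exact: (le_trans (normr_ge0 _) HA).
rewrite !idxS !big_rcons /=.
set pA := \prod_(i <- idx n) Af i; set pP := \prod_(i <- idx n) Pf i.
have -> : pA * Af n.+1 - pP * Pf n.+1 = (pA - pP) * Pf n.+1 + pA * (Af n.+1 - Pf n.+1)
  by ring.
apply: (le_trans (ler_normD _ _)); rewrite !normrM.
have Hrest : \sum_(j <- idx n) (\prod_(i <- rcons (idx n) n.+1 | i != j) Sf i) * `|Af j - Pf j|
   = (\sum_(j <- idx n) (\prod_(i <- idx n | i != j) Sf i) * `|Af j - Pf j|) * Sf n.+1.
  rewrite mulr_suml; apply: eq_big_seq => j; rewrite mem_idx => Hj.
  rewrite big_rcons /=; have -> : (n.+1 != j) = true by lia.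
  by rewrite mulrAC.
rewrite Hrest; apply: lerD.
  apply: ler_pM; [exact: normr_ge0|exact: normr_ge0|exact: IH|exact: HP].
rewrite eqxx mulr1.
have -> : \prod_(i <- idx n | i != n.+1) Sf i = \prod_(i <- idx n) Sf i.
  rewrite big_seq_cond [RHS]big_seq; apply: eq_bigl => i /=.
  apply/idP/idP => [/andP[]//|ii]; rewrite ii /=; move: ii; rewrite mem_idx; lia.
apply: ler_wpM2r; first exact: normr_ge0.
rewrite /pA normr_prod big_seq [X in _ <= X]big_seq; apply: ler_prod => i ii.
by rewrite normr_ge0; have [] := H' i ii.
Qed.

Lemma gen_term (x y g e e' c : R) (s : seq nat) (P : pred nat)
   (S : R -> nat -> R) (hh : nat -> R) :
  0 < x -> x <= y -> 0 <= g -> e' = e - c ->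
  (forall i, i \in s -> P i -> 0 <= S x i * powR x (- hh i) <= S y i * powR y (- hh i)) ->
  0 <= e' + \sum_(i <- s | P i) hh i ->
  (\prod_(i <- s | P i) S x i) * (g * powR x e) <=
  (\prod_(i <- s | P i) S y i) * g * powR y e' * powR x c.
Proof.
move=> x0 xy g0 Ee HS He.
have y0 : 0 < y by exact: (lt_le_trans x0).
have split1 : forall z, 0 < z -> \prod_(i <- s | P i) S z i =
    (\prod_(i <- s | P i) (S z i * powR z (- hh i))) * powR z (\sum_(i <- s | P i) hh i).
  move=> z z0; rewrite powR_sum // -big_split /=; apply: eq_bigr => i _.
  by rewrite -mulrA -powRD' // addNr powRr0 mulr1.
rewrite (split1 x x0) (split1 y y0).
set Hs := \sum_(i <- s | P i) hh i.
have -> : powR x e = powR x (e' + Hs) * powR x (- Hs) * powR x c.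
  by rewrite -!powRD' // Ee; congr (powR x _); ring.
have -> : (\prod_(i <- s | P i) (S x i * powR x (- hh i))) * powR x Hs *
   (g * (powR x (e' + Hs) * powR x (- Hs) * powR x c)) =
   g * ((\prod_(i <- s | P i) (S x i * powR x (- hh i))) * powR x (e' + Hs)) * powR x c.
  have E1 : powR x Hs * powR x (- Hs) = 1 by rewrite -powRD' // subrr powRr0.
  by rewrite -[RHS]mulrA -[X in _ = X](mulr1) -E1; ring.
have -> : (\prod_(i <- s | P i) (S y i * powR y (- hh i))) * powR y Hs * g * powR y e' * powR x c
   = g * ((\prod_(i <- s | P i) (S y i * powR y (- hh i))) * powR y (e' + Hs)) * powR x c.
  by rewrite powRD' //; ring.
apply: ler_wpM2r; first exact: powR_ge0.
apply: ler_wpM2l => //; apply: ler_pM.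
- by rewrite big_seq_cond; apply: prodr_ge0 => i /andP[ii Pi]; case/andP: (HS i ii Pi).
- exact: powR_ge0.
- by rewrite big_seq_cond [X in _ <= X]big_seq_cond; apply: ler_prod => i /andP[ii Pi]; apply: HS.
- exact: powR_mono.
Qed.

End PartC.

Section PartC2.
Variable R : realType.

Definition Sfun (h k : nat -> int) (a : nat -> int -> R) (d G : nat -> R) (y : R) (i : nat) : R :=
  \sum_(l <- zrange (h i) (k i)) `|a i l| * pwz y l + G i * powR y ((k i)%:~R + d i).

Lemma S_mono h k a d G x y i : 0 < x -> x <= y -> h i <= k i -> 0 < d i -> 0 <= G i ->
  0 <= Sfun h k a d G x i * powR x (- (h i)%:~R) <=
  Sfun h k a d G y i * powR y (- (h i)%:~R).
Proof.
move=> x0 xy hk d0 G0; apply/andP; split.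
  rewrite mulr_ge0 ?powR_ge0 // addr_ge0 ?mulr_ge0 ?powR_ge0 //.
  by rewrite big_seq; apply: sumr_ge0 => l _; rewrite mulr_ge0 // ltW // pwz_gt0.
rewrite /Sfun !mulrDl; apply: lerD.
  rewrite !mulr_suml big_seq [X in _ <= X]big_seq; apply: ler_sum => l.
  rewrite mem_zrange => /andP[Hl _]; rewrite -!mulrA; apply: ler_wpM2l => //.
  apply: powR_mono2 => //.
  have : ((h i)%:~R : R) <= l%:~R by rewrite ler_int.
  lra.
rewrite -!mulrA; apply: ler_wpM2l => //; apply: powR_mono2 => //.
have : ((h i)%:~R : R) <= (k i)%:~R by rewrite ler_int.
lra.
Qed.

Lemma partC (eps0 : R) (N : nat) (A : nat -> R -> R)
    (h k : nat -> int) (a : nat -> int -> R) (d G ep : nat -> R) :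
  (forall m, (1 <= m <= N)%N ->
     is_expansion eps0 (A m) (h m) (k m) (a m) (d m) (G m) (ep m)) ->
  forall n, (1 <= n <= N)%N ->
  is_expansion eps0 (fun x => \prod_(m <- idx n) A m x)
        (hC h n) (kC h k n) (ccoef h k a n) (dC h k d n) (GC h k a d G ep n) (eC ep n)
  /\ rminl d (idx n) <= dC h k d n.
Proof.
move=> Hexp n Hn.
have nn : idx n != [::] by rewrite idx_nil; lia.
have Hm : forall m, m \in idx n ->
    is_expansion eps0 (A m) (h m) (k m) (a m) (d m) (G m) (ep m).
  by move=> m; rewrite mem_idx => Hm; apply: Hexp; lia.
pose K := fun m => k m + \sum_(r <- idx n | r != m) h r.
have [kC1 [m0 m0i kCE]] := zminl_spec K (idx n) nn.
have [eC1 [m2 m2i eCE]] := rminl_spec R ep (idx n) nn.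
have m0L : m0 \in LC h k n.
  by rewrite mem_filter m0i andbT; apply/eqP; rewrite /kC; exact: (esym kCE).
have LCn : LC h k n != [::] by apply/eqP => E; rewrite E in m0L.
have [dC1 [m1 m1L dCE]] := rminl_spec R d (LC h k n) LCn.
have m1i : m1 \in idx n by move: m1L; rewrite mem_filter => /andP[].
have /andP[d0 d1] : 0 < dC h k d n <= 1.
  by rewrite /dC dCE; have [_ /andP[-> ->] _ _ _] := Hm m1 m1i.
have /andP[e0 e1] : 0 < eC ep n <= eps0.
  by rewrite /eC eCE; have [_ _ _ /andP[-> ->] _] := Hm m2 m2i.
have kCm : forall m, m \in idx n -> kC h k n <= K m by move=> m mi; apply: kC1.
have hk : hC h n <= kC h k n.
  have [Hhk _ _ _ _] := Hm m0 m0i.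
  have -> : kC h k n = K m0 by exact: kCE.
  rewrite /hC /K (bigD1_seq m0) ?idx_uniq //= lerD2r; exact: Hhk.
split; last first.
  have [H1 _] := rminl_spec R d (idx n) nn; rewrite /dC dCE; exact: H1.
have Sg0 : forall y, 0 < y -> forall i, i \in idx n -> 0 < Sfun h k a d G y i.
  move=> y y0 i ii; have [_ _ Gi _ _] := Hm i ii; rewrite /Sfun.
  apply: ltr_pwDr; first by rewrite mulr_gt0 // powR_gt0.
  by rewrite big_seq; apply: sumr_ge0 => l _; rewrite mulr_ge0 // ltW // pwz_gt0.
split => //; first by rewrite d0 d1.
-
  rewrite /GC; apply: ltr_wpDl.
    apply: sumr_ge0 => l _; rewrite mulr_ge0 ?powR_ge0 //.
    by apply: prodr_ge0 => i _; exact: normr_ge0.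
  apply: psum_gt0 => // j ji; have [_ _ Gj _ _] := Hm j ji.
  rewrite mulr_gt0 ?powR_gt0 // mulr_gt0 //.
  rewrite big_seq_cond; apply: prodr_gt0 => i /andP[ii _].
  exact: (Sg0 _ e0 i ii).
- by rewrite e0 e1.
move=> x /andP[x0 xe].
have xm : forall m, m \in idx n -> x <= ep m.
  by move=> m mi; apply: (le_trans xe); rewrite /eC; apply: eC1.
pose Pf := fun i => \sum_(l <- zrange (h i) (k i)) a i l * pwz x l.
pose cl := fun l : nat -> int => \prod_(i <- idx n) a i (l i).
have EP : \prod_(i <- idx n) Pf i = \sum_(l <- box h k n) cl l * pwz x (lsum n l).
  rewrite /Pf -(box_prod R h k (fun i j => a i j * pwz x j)).
  apply: eq_bigr => l _; by rewrite big_split /= /lsum pwz_sum.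
have EC : \sum_(r <- zrange (hC h n) (kC h k n)) ccoef h k a n r * pwz x r =
    \sum_(l <- box h k n | lsum n l <= kC h k n) cl l * pwz x (lsum n l).
  rewrite /ccoef; under eq_bigr do rewrite mulr_suml.
  under eq_bigr do rewrite big_mkcond.
  rewrite exchange_big /= [RHS]big_mkcond.
  apply: (@eq_big_all _ _ _ _ _ _ _ _ _ (box_all h k n)) => l Hl.
  rewrite -big_mkcond /= sum_eq_zr (inbox_lsum h k n l Hl) /=.
  by case: ifP.
have Ediff : \prod_(i <- idx n) Pf i -
   \sum_(r <- zrange (hC h n) (kC h k n)) ccoef h k a n r * pwz x r =
   \sum_(l <- box h k n | kC h k n < lsum n l) cl l * pwz x (lsum n l).
  rewrite EP EC (bigID (fun l => lsum n l <= kC h k n)) /= addrC addrK.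
  by apply: eq_bigl => l; rewrite ltNge.
set X := powR x ((kC h k n)%:~R + dC h k d n).
have -> : \prod_(m <- idx n) A m x -
    \sum_(r <- zrange (hC h n) (kC h k n)) ccoef h k a n r * pwz x r =
    (\prod_(m <- idx n) A m x - \prod_(i <- idx n) Pf i) +
    (\prod_(i <- idx n) Pf i -
     \sum_(r <- zrange (hC h n) (kC h k n)) ccoef h k a n r * pwz x r) by ring.
rewrite Ediff /GC mulrDl addrC; apply: (le_trans (ler_normD _ _)); apply: lerD.
-
  apply: (le_trans (ler_norm_sum _ _ _)); rewrite mulr_suml.
  apply: (@ler_sum_all _ _ _ _ _ _ _ (box_all h k n)) => l Hl Hlt.
  rewrite normrM /cl normr_prod (ger0_norm (ltW (pwz_gt0 _ _ _ x0))) -mulrA.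
  apply: ler_wpM2l; first by apply: prodr_ge0 => i _; exact: normr_ge0.
  rewrite /X; apply: (mono_split _ _ _ _ _ _ x0 xe); first by ring.
  have : ((kC h k n + 1)%:~R : R) <= (lsum n l)%:~R by rewrite ler_int lezD1.
  rewrite intrD; lra.
- apply: (le_trans (tele _ n (fun i => A i x) Pf (Sfun h k a d G x) _)).
    move=> i ii; have [_ _ _ _ Hb] := Hm i ii.
    have HP : `|Pf i| <= \sum_(l <- zrange (h i) (k i)) `|a i l| * pwz x l.
      apply: (le_trans (ler_norm_sum _ _ _)); apply: ler_sum => l _.
      by rewrite normrM (ger0_norm (ltW (pwz_gt0 _ _ _ x0))).
    have G0 : 0 <= G i * powR x ((k i)%:~R + d i).
      by have [_ _ Gi _ _] := Hm i ii; rewrite mulr_ge0 ?powR_ge0 // ltW.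
    split; last by rewrite /Sfun; apply: (le_trans HP); rewrite lerDl.
    have -> : A i x = Pf i + (A i x - Pf i) by ring.
    apply: (le_trans (ler_normD _ _)); rewrite /Sfun; apply: lerD => //.
    by apply: Hb; rewrite x0 xm.
  rewrite mulr_suml big_seq [X in _ <= X]big_seq; apply: ler_sum => j ji.
  have [_ /andP[dj0 dj1] Gj0 _ Hb] := Hm j ji.
  apply: (@le_trans _ _ ((\prod_(i <- idx n | i != j) Sfun h k a d G x i) *
       (G j * powR x ((k j)%:~R + d j)))).
    apply: ler_wpM2l.
      rewrite big_seq_cond; apply: prodr_ge0 => i /andP[ii _]; apply: ltW.
      exact: (Sg0 _ x0 i ii).
    by apply: Hb; rewrite x0 xm.
  rewrite /X; apply: (gen_term _ _ _ _ _ _ _ _ _ (Sfun h k a d G)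
                       (fun i => (h i)%:~R) x0 xe).
  + exact: ltW.
  + by ring.
  + move=> i ii _; have [Hhk /andP[di0 _] Gi0 _ _] := Hm i ii.
    apply: S_mono => //; try exact: ltW; exact: (le_trans xe).
  + have Hg := int_gap R (kC h k n) (K j) (d j) (dC h k d n) (kCm j ji) dj0 d1.
    have : 0 <= (K j)%:~R + d j - (kC h k n)%:~R - dC h k d n.
      apply: Hg => /eqP Ek; apply: dC1.
      by rewrite mem_filter ji andbT; apply/eqP; rewrite Ek.
    rewrite /K intrD intr_sum; lra.
Qed.

End PartC2.

Lemma minl_perm (T : realDomainType) n s (f : nat -> T) (P : pred nat) :
  perm_range n s -> [seq m <- idx n | P m] != [::] ->
  \big[Num.min/(f \o s) (head 0%N [seq m <- idx n | P (s m)])]_(m <- [seq m <- idx n | P (s m)]) (f \o s) m =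
  \big[Num.min/f (head 0%N [seq m <- idx n | P m])]_(m <- [seq m <- idx n | P m]) f m.
Proof.
move=> Hs ne; have [H1 [m1 m1L E]] := minl_spec T f _ ne.
have inj : forall m, m \in [seq m <- idx n | P m] ->
    exists2 i, i \in [seq m <- idx n | P (s m)] & s i = m.
  move=> m; rewrite mem_filter => /andP[Pm]; rewrite mem_idx => mi.
  have [i ii si] := perm_surj n s m Hs mi.
  by exists i => //; rewrite mem_filter si Pm mem_idx.
have [i ii si] := inj m1 m1L.
apply: minl_unique.
- by apply/eqP => E'; rewrite E' in ii.
- move=> m; rewrite mem_filter => /andP[Pm mi] /=; apply: H1.
  rewrite mem_filter Pm /=; move: mi; rewrite !mem_idx; case: Hs => H _; exact: H.
- by exists i => //=; rewrite si.
Qed.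

Lemma minl_eq (T : realDomainType) (f g : nat -> T) (L : seq nat) :
  L != [::] -> (forall m, m \in L -> f m = g m) ->
  \big[Num.min/f (head 0%N L)]_(m <- L) f m = \big[Num.min/g (head 0%N L)]_(m <- L) g m.
Proof.
move=> ne H; have [H1 [m1 m1L E]] := minl_spec T g _ ne.
apply: minl_unique => //.
- by move=> m mL; rewrite H //; apply: H1.
- by exists m1 => //; rewrite H.
Qed.

Lemma filter_true (L : seq nat) : [seq m <- L | true] = L.
Proof. exact: filter_predT. Qed.

Lemma minl_perm0 (T : realDomainType) n s (f : nat -> T) :
  perm_range n s -> (0 < n)%N ->
  \big[Num.min/(f \o s) (head 0%N (idx n))]_(m <- idx n) (f \o s) m =
  \big[Num.min/f (head 0%N (idx n))]_(m <- idx n) f m.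
Proof.
move=> Hs n0; have := minl_perm T n s f xpredT Hs.
by rewrite !filter_predT => ->; rewrite // idx_nil.
Qed.

Lemma kB_perm k n s : perm_range n s -> (0 < n)%N -> kB (k \o s) n = kB k n.
Proof. exact: minl_perm0. Qed.

Lemma eB_perm (R : realType) (ep : nat -> R) n s : perm_range n s -> (0 < n)%N ->
  eB (ep \o s) n = eB ep n.
Proof. exact: minl_perm0. Qed.

Lemma dB_perm (R : realType) k (d : nat -> R) n s : perm_range n s -> (0 < n)%N ->
  dB (k \o s) (d \o s) n = dB k d n.
Proof.
move=> Hs n0; rewrite /dB /rminl /KB (kB_perm k n s Hs n0).
apply: (minl_perm _ n s d (fun m => k m == kB k n) Hs).
have nn : idx n != [::] by rewrite idx_nil.
have [_ [m0 m0i E]] := zminl_spec k (idx n) nn.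
apply/eqP => E'; have : m0 \in [seq m <- idx n | k m == kB k n].
  by rewrite mem_filter m0i andbT /kB E.
by rewrite E'.
Qed.

Lemma big_idx_perm_neq (R : Type) (x0 : R) (op : Monoid.com_law x0) n s (F : nat -> R) j :
  perm_range n s -> j \in idx n ->
  \big[op/x0]_(i <- idx n | i != j) F (s i) = \big[op/x0]_(i <- idx n | i != s j) F i.
Proof.
move=> Hs ji; transitivity (\big[op/x0]_(i <- map s (idx n) | i != s j) F i); last first.
  by apply: perm_big; exact: perm_idx.
rewrite big_map big_seq_cond [RHS]big_seq_cond; apply: eq_bigl => i /=.
case ii: (i \in idx n) => //=; case: Hs => _ Hinj.
apply/idP/idP => [/eqP nij|/eqP nij]; apply/eqP => E.
  by apply: nij; apply: Hinj => //; rewrite -mem_idx.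
by apply: nij; rewrite E.
Qed.

Lemma GB_perm (R : realType) h k (a : nat -> int -> R) d G ep n s :
  perm_range n s -> (0 < n)%N ->
  GB (h \o s) (k \o s) (a \o s) (d \o s) (G \o s) (ep \o s) n = GB h k a d G ep n.
Proof.
move=> Hs n0; rewrite /GB (kB_perm k n s Hs n0) (dB_perm R k d n s Hs n0) (eB_perm R ep n s Hs n0).
exact: (big_idx_perm _ _ _ n s (fun i =>
    G i * powR (eB ep n) ((k i)%:~R + d i - (kB k n)%:~R - dB k d n)
     + \sum_(j <- zrange (kB k n + 1) (k i))
         `|ext h k a i j| * powR (eB ep n) (j%:~R - (kB k n)%:~R - dB k d n)) Hs).
Qed.

Lemma kC_perm h k n s : perm_range n s -> (0 < n)%N ->
  kC (h \o s) (k \o s) n = kC h k n.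
Proof.
move=> Hs n0; have nn : idx n != [::] by rewrite idx_nil.
pose K := fun m => k m + \sum_(r <- idx n | r != m) h r.
rewrite /kC /zminl (minl_eq _ _ (K \o s) (idx n) nn).
  exact: (minl_perm0 _ n s K Hs n0).
move=> m mi /=; rewrite /K; congr (_ + _).
exact: (big_idx_perm_neq _ _ _ n s h m Hs mi).
Qed.

Lemma dC_perm (R : realType) h k (d : nat -> R) n s : perm_range n s -> (0 < n)%N ->
  dC (h \o s) (k \o s) (d \o s) n = dC h k d n.
Proof.
move=> Hs n0; have nn : idx n != [::] by rewrite idx_nil.
pose K := fun m => k m + \sum_(r <- idx n | r != m) h r.
rewrite /dC /rminl /LC (kC_perm h k n s Hs n0).
have -> : [seq m <- idx n | (k \o s) m + \sum_(r <- idx n | r != m) (h \o s) r == kC h k n]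
        = [seq m <- idx n | K (s m) == kC h k n].
  apply: eq_in_filter => m mi /=; rewrite /K.
  by rewrite (big_idx_perm_neq _ _ _ n s h m Hs mi).
apply: (minl_perm _ n s d (fun m => K m == kC h k n) Hs).
have [_ [m0 m0i E]] := zminl_spec K (idx n) nn.
apply/eqP => E'; have : m0 \in [seq m <- idx n | K m == kC h k n].
  by rewrite mem_filter m0i andbT; apply/eqP; rewrite /kC; exact: (esym E).
by rewrite E'.
Qed.

Lemma eC_perm (R : realType) (ep : nat -> R) n s : perm_range n s -> (0 < n)%N ->
  eC (ep \o s) n = eC ep n.
Proof. exact: minl_perm0. Qed.

Fixpoint tbox (h k : nat -> int) (n : nat) : seq (seq int) :=
  match n with
  | 0 => [:: [::]]
  | n'.+1 => [seq rcons t j | t <- tbox h k n', j <- zrange (h n'.+1) (k n'.+1)]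
  end.

Definition enc n (l : nat -> int) : seq int := map l (idx n).
Definition dec (t : seq int) : nat -> int := fun i => nth 0 t i.-1.

Lemma dec_enc n l i : i \in idx n -> dec (enc n l) i = l i.
Proof.
rewrite mem_idx => Hi; rewrite /dec /enc /idx (nth_map 0%N); last by rewrite size_iota; lia.
by rewrite nth_iota; [congr l; lia| lia].
Qed.

Lemma map_enc_box h k n : map (enc n) (box h k n) = tbox h k n.
Proof.
elim: n => [//|n IH]; rewrite boxS /= -IH map_allpairs allpairs_mapl.
rewrite /allpairs_dep; congr flatten; apply: eq_map => l; apply: eq_map => j.
rewrite /enc idxS map_rcons /upd eqxx; congr rcons.
apply/eq_in_map => i; rewrite mem_idx => Hi.
by have -> : (i == n.+1) = false by lia.
Qed.

Lemma mem_tbox h k n t :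
  (t \in tbox h k n) = (size t == n) && all (fun i => dec t i \in zrange (h i) (k i)) (idx n).
Proof.
elim: n t => [|n IH] t.
  by rewrite /= inE /idx /= andbT; case: t.
apply/idP/idP.
  move=> /allpairsP [[t' j] [t'in jin ->]]; simpl in t'in, jin.
  move: t'in; rewrite IH => /andP[/eqP st' Hall].
  rewrite size_rcons st' eqxx andTb idxS all_rcons; apply/andP; split.
    by rewrite /dec /= nth_rcons st' ltnn eqxx.
  apply/allP => i ii; have := allP Hall i ii; rewrite /dec nth_rcons st'.
  by move: ii; rewrite mem_idx => Hi; have -> : (i.-1 < n)%N by lia.
case/lastP: t => [|t' j]; first by case/andP.
rewrite size_rcons eqSS idxS all_rcons => /andP[/eqP st' /andP[Hj Hall]].
apply/allpairsP; exists (t', j); split => //.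
  rewrite /= IH st' eqxx /=; apply/allP => i ii; have := allP Hall i ii.
  rewrite /dec nth_rcons st'.
  by move: ii; rewrite mem_idx => Hi; have -> : (i.-1 < n)%N by lia.
by move: Hj; rewrite /dec /= nth_rcons st' ltnn eqxx.
Qed.

Lemma tbox_uniq h k n : uniq (tbox h k n).
Proof.
elim: n => [//|n IH] /=; apply: allpairs_uniq => //; first exact: uniq_zrange.
by move=> [t1 j1] [t2 j2] _ _ /= /rcons_inj [-> ->].
Qed.

Lemma size_tbox h k n : size (tbox h k n) = (\prod_(i <- idx n) size (zrange (h i) (k i)))%N.
Proof.
elim: n => [|n IH]; first by rewrite /idx /= big_nil.
by rewrite /= size_allpairs IH idxS big_rcons.
Qed.

Definition rho n s (t : seq int) : seq int := [seq dec t (s i) | i <- idx n].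

Lemma dec_rho n s t i : i \in idx n -> dec (rho n s t) i = dec t (s i).
Proof.
move=> ii; rewrite /rho -/(enc n (fun i => dec t (s i))).
exact: (dec_enc n (fun i => dec t (s i)) i ii).
Qed.

Lemma perm_tbox h k n s : perm_range n s ->
  perm_eq (map (rho n s) (tbox h k n)) (tbox (h \o s) (k \o s) n).
Proof.
move=> Hs; have Hs' := Hs; case: Hs' => Hs1 Hs2.
have inj : {in tbox h k n &, injective (rho n s)}.
  move=> u u'; rewrite !mem_tbox => /andP[/eqP su _] /andP[/eqP su' _] E.
  apply: (@eq_from_nth _ 0); first by rewrite su su'.
  move=> p; rewrite su => pn.
  have [i ii si] := perm_surj n s p.+1 Hs (ltac:(lia)).
  have := congr1 (fun t => dec t i) E; rewrite !dec_rho ?mem_idx //.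
  by rewrite /dec si.
have us : uniq (map (rho n s) (tbox h k n)).
  by rewrite map_inj_in_uniq // tbox_uniq.
have sub : {subset map (rho n s) (tbox h k n) <= tbox (h \o s) (k \o s) n}.
  move=> t /mapP[u]; rewrite mem_tbox => /andP[/eqP su Hall] ->.
  rewrite mem_tbox /rho size_map size_iota eqxx /=.
  apply/allP => i ii; rewrite -/(rho n s u) dec_rho //=.
  apply: (allP Hall); rewrite mem_idx; apply: Hs1; by rewrite -mem_idx.
have sz : (size (tbox (h \o s) (k \o s) n) <= size (map (rho n s) (tbox h k n)))%N.
  rewrite size_map !size_tbox.
  by rewrite (big_idx_perm _ _ _ n s (fun i => size (zrange (h i) (k i))) Hs).
have [_ E] := uniq_min_size us sub sz.
by apply: uniq_perm => //; exact: tbox_uniq.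
Qed.

Lemma box_to_tbox (R : Type) (x0 : R) (op : Monoid.com_law x0) h k n
    (F : (nat -> int) -> R) (P : pred (nat -> int)) :
  (forall l l', (forall i, i \in idx n -> l i = l' i) -> F l = F l' /\ P l = P l') ->
  \big[op/x0]_(l <- box h k n | P l) F l = \big[op/x0]_(t <- tbox h k n | P (dec t)) F (dec t).
Proof.
move=> H; rewrite -map_enc_box big_map; apply: eq_big => [l|l _].
  by have [_ ->] := H (dec (enc n l)) l (dec_enc n l).
by have [-> _] := H (dec (enc n l)) l (dec_enc n l).
Qed.

Lemma lsum_rho n s u : perm_range n s -> lsum n (dec (rho n s u)) = lsum n (dec u).
Proof.
move=> Hs; rewrite /lsum -(big_idx_perm _ _ _ n s (dec u) Hs).
by apply: eq_big_seq => i ii; rewrite dec_rho.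
Qed.

Lemma prod_rho (R : comRingType) n s u (g : nat -> int -> R) : perm_range n s ->
  \prod_(i <- idx n) g (s i) (dec (rho n s u) i) = \prod_(i <- idx n) g i (dec u i).
Proof.
move=> Hs; rewrite -(big_idx_perm _ _ _ n s (fun i => g i (dec u i)) Hs).
by apply: eq_big_seq => i ii; rewrite dec_rho.
Qed.

Lemma GC_perm (R : realType) h k (a : nat -> int -> R) d G ep n s :
  perm_range n s -> (0 < n)%N ->
  GC (h \o s) (k \o s) (a \o s) (d \o s) (G \o s) (ep \o s) n = GC h k a d G ep n.
Proof.
move=> Hs n0; rewrite /GC (kC_perm h k n s Hs n0) (dC_perm R h k d n s Hs n0)
  (eC_perm R ep n s Hs n0).
congr (_ + _).
  set c := kC h k n; set dd := dC h k d n; set ee := eC ep n.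
  have agr : forall (g : nat -> int -> R),
     forall l l', (forall i, i \in idx n -> l i = l' i) ->
     (\prod_(i <- idx n) `|g i (l i)|) * powR ee ((lsum n l)%:~R - c%:~R - dd) =
     (\prod_(i <- idx n) `|g i (l' i)|) * powR ee ((lsum n l')%:~R - c%:~R - dd)
     /\ (c < lsum n l) = (c < lsum n l').
    move=> g l l' H.
    have El : lsum n l = lsum n l' by apply: eq_big_seq => i ii; rewrite H.
    split; last by rewrite El.
    rewrite El; congr (_ * _); apply: eq_big_seq => i ii; by rewrite H.
  rewrite (box_to_tbox _ _ _ (h \o s) (k \o s) n _ (fun l => c < lsum n l) (agr (a \o s))).
  rewrite (box_to_tbox _ _ _ h k n _ (fun l => c < lsum n l) (agr a)).
  rewrite -(perm_big _ (perm_tbox h k n s Hs)) big_map.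
  apply: eq_big => [u|u _] /=; first by rewrite lsum_rho.
  rewrite lsum_rho //; congr (_ * _).
  exact: (prod_rho _ n s u (fun i l => `|a i l|) Hs).
pose Sf := fun i => \sum_(l <- zrange (h i) (k i)) `|a i l| * pwz (eC ep n) l
           + G i * powR (eC ep n) ((k i)%:~R + d i).
pose Phi := fun j => (\prod_(i <- idx n | i != j) Sf i) * G j *
   powR (eC ep n) ((k j)%:~R + d j - (kC h k n)%:~R - dC h k d n).
transitivity (\sum_(j <- idx n) Phi (s j)); last exact: (big_idx_perm _ _ _ n s Phi Hs).
apply: eq_big_seq => j ji; rewrite /Phi.
by rewrite -(big_idx_perm_neq _ _ _ n s Sf j Hs ji).
Qed.

Theorem lemma3 (R : realType) (eps0 : R) (N : nat) (A : nat -> R -> R)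
    (h k : nat -> int) (a : nat -> int -> R) (d G ep : nat -> R) :
  0 < eps0 <= 1 -> (1 <= N)%N ->
  (forall m, (1 <= m <= N)%N ->
     is_expansion eps0 (A m) (h m) (k m) (a m) (d m) (G m) (ep m)) ->
  forall n, (1 <= n <= N)%N ->
  [/\ is_expansion eps0 (fun x => \sum_(m <- idx n) A m x)
        (hB h n) (kB k n) (bcoef h k a n) (dB k d n) (GB h k a d G ep n) (eB ep n),
      rminl d (idx n) <= dB k d n,
      is_expansion eps0 (fun x => \prod_(m <- idx n) A m x)
        (hC h n) (kC h k n) (ccoef h k a n) (dC h k d n) (GC h k a d G ep n) (eC ep n),
      rminl d (idx n) <= dC h k d n &
      forall s : nat -> nat, perm_range n s ->
        [/\ dB (k \o s) (d \o s) n = dB k d n,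
            GB (h \o s) (k \o s) (a \o s) (d \o s) (G \o s) (ep \o s) n = GB h k a d G ep n &
            eB (ep \o s) n = eB ep n] /\
        [/\ dC (h \o s) (k \o s) (d \o s) n = dC h k d n,
            GC (h \o s) (k \o s) (a \o s) (d \o s) (G \o s) (ep \o s) n = GC h k a d G ep n &
            eC (ep \o s) n = eC ep n]].
Proof.
move=> _ _ Hexp n Hn.
have [HB dBge] := partB R eps0 N A h k a d G ep Hexp n Hn.
have [HC dCge] := partC R eps0 N A h k a d G ep Hexp n Hn.
have n0 : (0 < n)%N by case/andP: Hn.
split => // s Hs; split; split.
- exact: (dB_perm R k d n s Hs n0).
- exact: (GB_perm R h k a d G ep n s Hs n0).
- exact: (eB_perm R ep n s Hs n0).
- exact: (dC_perm R h k d n s Hs n0).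
- exact: (GC_perm R h k a d G ep n s Hs n0).
- exact: (eC_perm R ep n s Hs n0).
Qed.
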